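(* Let $\Gamma_M$ ($M>0$) be a family of nonatomic routing games with a single OD pair with demand $M$, sharing the same graph, path set and edge costs $(c_e)_{e\in\mathcal E}$, where each $c_e$ is analytic at $0$, i.e. coincides with a convergent power series $\sum_{k\ge 0}c_{k,e}x^k$ on some interval $[0,\delta_e)$, $\delta_e>0$. Then $\mathrm{PoA}(\Gamma_M)\to 1$ as $M\to 0$.
   Context: A nonatomic routing game with a single OD pair consists of a finite directed multigraph with edge set $\mathcal E$, a nonempty finite set $\mathcal P$ of paths from an origin to a destination, a demand $M>0$, and continuous nondecreasing edge costs $c_e:[0,\infty)\to[0,\infty)$. Feasible flows: $f\in\mathbb R_+^{\mathcal P}$ with $\sum_p f_p=M$; loads $x_e=\sum_{p\ni e}f_p$; path costs $c_p(f)=\sum_{e\in p}c_e(x_e)$. A Wardrop equilibrium is a feasible $f^*$ with $c_p(f^* )\le c_{p'}(f^* )$ whenever $f^*_p>0$. Social cost $L(x)=\sum_e x_ec_e(x_e)$; $\mathrm{Opt}$ is its minimum over feasible loads, $\mathrm{Eq}=L(x^* )$ at an equilibrium load, and $\mathrm{PoA}=\mathrm{Eq}/\mathrm{Opt}$; it is assumed that $\mathrm{Opt}>0$ (otherwise $\mathrm{PoA}:=1$). *)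

(* Defs.v *)
From HB Require Import structures.
From mathcomp Require Import all_boot all_order all_algebra.
From mathcomp Require Import all_classical all_reals all_analysis.
Set Implicit Arguments. Unset Strict Implicit. Unset Printing Implicit Defensive.
Import Order.TTheory GRing.Theory Num.Theory.
Import numFieldNormedType.Exports.
Local Open Scope classical_set_scope.
Local Open Scope ring_scope.

Section Routing.
Variables (R : realType) (V E P : finType).
Variables (tail head : E -> V) (orig dest : V).
Variable pe : P -> seq E.
Variable c : E -> R -> R.

Fixpoint walk_from (v : V) (es : seq E) : bool :=
  if es is e :: es' then (tail e == v) && walk_from (head e) es' else true.

Definition is_od_path (es : seq E) : bool :=
  [&& es != [::], walk_from orig es,
      last orig (map head es) == dest & uniq (orig :: map head es)].

Definition valid_paths : Prop :=
  [/\ (0 < #|P|)%N, injective pe & forall p, is_od_path (pe p)].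

Definition admissible_cost (ce : R -> R) : Prop :=
  [/\ {within `[0, +oo[, continuous ce},
      {in `[0, +oo[ &, {homo ce : x y / x <= y}}
    & forall x, 0 <= x -> 0 <= ce x].

Definition analytic_at0 (ce : R -> R) : Prop :=
  exists (coef : nat -> R) (delta : R), 0 < delta /\
    forall x, 0 <= x < delta ->
      (fun n : nat => \sum_(0 <= k < n) coef k * x ^+ k) @ \oo --> ce x.

Definition feasible (M : R) (f : P -> R) : Prop :=
  (forall p, 0 <= f p) /\ \sum_(p : P) f p = M.

Definition load (f : P -> R) (e : E) : R := \sum_(p : P | e \in pe p) f p.

Definition path_cost (f : P -> R) (p : P) : R :=
  \sum_(e <- pe p) c e (load f e).

Definition wardrop_eq (M : R) (f : P -> R) : Prop :=
  feasible M f /\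
  forall p p', 0 < f p -> path_cost f p <= path_cost f p'.

Definition social_cost (f : P -> R) : R :=
  \sum_(e : E) load f e * c e (load f e).

(* optimal social cost over feasible flows (a minimum, attained by compactness) *)
Definition Opt (M : R) : R := inf [set social_cost f | f in feasible M].

Definition PoA (M : R) (f : P -> R) : R :=
  if 0 < Opt M then social_cost f / Opt M else 1.

End Routing.

(* Main.v *)
Require Import Defs.
From HB Require Import structures.
From mathcomp Require Import all_boot all_order all_algebra.
From mathcomp Require Import all_classical all_reals all_analysis.
From mathcomp Require Import ring lra.
Import Order.TTheory GRing.Theory Num.Theory.
Import numFieldNormedType.Exports.
Local Open Scope classical_set_scope.
Local Open Scope ring_scope.
Set Implicit Arguments. Unset Strict Implicit. Unset Printing Implicit Defensive.
Lemma geom_bound_aux (R : realFieldType) (r : R) (m n : nat) :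
  0 <= r -> r <= 1/2 -> (m <= n)%N ->
  \sum_(m <= k < n) r ^+ k <= 2 * r ^+ m - 2 * r ^+ n.
Proof.
move=> r0 r12; elim: n => [|n IH].
  by rewrite leqn0 => /eqP ->; rewrite big_geq // subrr.
rewrite leq_eqVlt => /orP[/eqP <-|]; first by rewrite big_geq // subrr.
rewrite ltnS => mn; rewrite big_nat_recr //=.
apply: le_trans (lerD (IH mn) (lexx _)) _.
rewrite exprS.
have h : 0 <= r ^+ n by apply: exprn_ge0.
have : r * r ^+ n <= 1/2 * r ^+ n by apply: ler_wpM2r.
lra.
Qed.

Lemma geom_bound (R : realFieldType) (r : R) (m n : nat) :
  0 <= r -> r <= 1/2 -> \sum_(m <= k < n) r ^+ k <= 2 * r ^+ m.
Proof.
move=> r0 r12; case: (leqP m n) => mn.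
  apply: le_trans (geom_bound_aux r0 r12 mn) _.
  have : 0 <= r ^+ n by apply: exprn_ge0.
  lra.
rewrite big_geq ?(ltnW mn) //.
have : 0 <= r ^+ m by apply: exprn_ge0.
lra.
Qed.
Lemma lim_bound (R : realType) (u : nat -> R) (l b K : R) :
  u @ \oo --> l -> (\forall n \near \oo, `|u n - b| <= K) -> `|l - b| <= K.
Proof.
move=> ul Hb; apply/ler_addgt0Pr => e e0.
move/cvgrPdist_le: ul => /(_ e e0) He.
have [n [h1 h2]] := filter_ex (filterS2 _ (fun n (h1 : `|l - u n| <= e) (h2 : `|u n - b| <= K) => conj h1 h2) He Hb).
apply: le_trans (ler_distD (u n) l b) _.
lra.
Qed.
Lemma coef_split (R : realType) (coef : nat -> R) (d n : nat) (x : R) :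
  (forall k, (k < d)%N -> coef k = 0) -> (d < n)%N ->
  \sum_(0 <= k < n) coef k * x ^+ k =
  coef d * x ^+ d + \sum_(d.+1 <= k < n) coef k * x ^+ k.
Proof.
move=> hz dn.
rewrite (big_cat_nat (n:=d)) //=; last exact: ltnW.
rewrite (big_cat_nat (n:=d.+1) (m:=d)) //= big_nat1.
rewrite big_nat_cond big1 ?add0r // => k /andP[/andP[_ kd] _].
by rewrite hz // mul0r.
Qed.

Lemma tail_bound (R : realType) (coef : nat -> R) (x0 B x : R) (m n : nat) :
  0 < x0 -> (forall k, `|coef k * x0 ^+ k| <= B) -> 0 <= x -> x <= x0 / 2 ->
  `|\sum_(m <= k < n) coef k * x ^+ k| <= 2 * B / x0 ^+ m * x ^+ m.
Proof.
move=> x0p hB x0' xx0.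
have B0 : 0 <= B by apply: le_trans (hB 0%N); exact: normr_ge0.
set r := x / x0.
have r0 : 0 <= r by rewrite /r divr_ge0 // ltW.
have r12 : r <= 1/2.
  rewrite /r ler_pdivrMr //.
  lra.
apply: le_trans (ler_norm_sum _ _ _) _.
apply: (@le_trans _ _ (\sum_(m <= k < n) B * r ^+ k)).
  apply: ler_sum => k _.
  have -> : coef k * x ^+ k = (coef k * x0 ^+ k) * r ^+ k.
    rewrite /r exprMn exprVn; field.
    by rewrite expf_neq0 // gt_eqF.
  rewrite normrM [`|r ^+ k|]ger0_norm ?exprn_ge0 //.
  by apply: ler_wpM2r => //; exact: exprn_ge0.
rewrite -mulr_sumr.
apply: le_trans (ler_wpM2l B0 (geom_bound m n r0 r12)) _.
rewrite /r exprMn exprVn.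
have : 0 < x0 ^+ m by apply: exprn_gt0.
move=> h.
rewrite le_eqVlt; apply/orP; left; apply/eqP; field.
by rewrite gt_eqF.
Qed.
Lemma edge_expansion (R : realType) (ce : R -> R) :
  analytic_at0 ce -> (forall x, 0 <= x -> 0 <= ce x) ->
  (exists rho, 0 < rho /\ forall x, 0 <= x < rho -> ce x = 0) \/
  (exists (d : nat) (a : R), 0 < a /\ exists C rho, 0 < rho /\ 0 <= C /\
     forall x, 0 <= x < rho -> `|ce x - a * x ^+ d| <= C * x ^+ d.+1).
Proof.
move=> [coef [delta [dpos Hs]]] hpos.
case: (pselect (forall k, coef k = 0)) => [Hz|Hnz].
  left; exists delta; split => // x hx.
  have := Hs x hx.
  have -> : (fun n : nat => \sum_(0 <= k < n) coef k * x ^+ k) = fun _ => 0.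
    by apply: funext => n; rewrite big1 // => k _; rewrite Hz mul0r.
  move=> H; apply/esym; exact: (cvg_unique (@Rhausdorff R) (cvg_cst (0:R)) H).
right.
move/existsNP: Hnz => [k0 hk0].
have exP : exists k, (fun k => coef k != 0) k by exists k0; apply/eqP.
case: (ex_minnP exP) => d /= hd hmin.
have hz : forall k, (k < d)%N -> coef k = 0.
  move=> k kd; apply/eqP; apply/negPn/negP => hk.
  by have := hmin k hk; rewrite leqNgt kd.
set x0 := delta / 2.
have x0p : 0 < x0 by rewrite /x0 divr_gt0.
have x0d : 0 <= x0 < delta by apply/andP; split; [exact: ltW|rewrite /x0; lra].
have Hx0 := Hs x0 x0d.
move/cvgrPdist_le: Hx0 => /(_ 1 ltr01) [N _ HN].
set B := 2 + \sum_(0 <= j < N) `|coef j * x0 ^+ j|.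
have hB : forall k, `|coef k * x0 ^+ k| <= B.
  move=> k; case: (leqP N k) => kN.
    have e : coef k * x0 ^+ k = (\sum_(0 <= j < k.+1) coef j * x0 ^+ j) - (\sum_(0 <= j < k) coef j * x0 ^+ j).
      by rewrite big_nat_recr //= addrAC subrr add0r.
    rewrite e.
    have h1 := HN k kN; have h2 := HN k.+1 (leqW kN).
    have := ler_distD (ce x0) (\sum_(0 <= j < k.+1) coef j * x0 ^+ j) (\sum_(0 <= j < k) coef j * x0 ^+ j).
    rewrite distrC /= in h2.
    have : 0 <= \sum_(0 <= j < N) `|coef j * x0 ^+ j| by apply: sumr_ge0 => j _; exact: normr_ge0.
    rewrite /B /=; lra.
  rewrite /B (big_cat_nat (n:=k)) //=; last exact: ltnW.
  rewrite (big_cat_nat (m:=k) (n:=k.+1)) //= big_nat1.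
  have : 0 <= \sum_(0 <= j < k) `|coef j * x0 ^+ j| by apply: sumr_ge0 => j _; exact: normr_ge0.
  have : 0 <= \sum_(k.+1 <= j < N) `|coef j * x0 ^+ j| by apply: sumr_ge0 => j _; exact: normr_ge0.
  lra.
have B0 : 0 <= B by apply: le_trans (hB 0%N); exact: normr_ge0.
set C := 2 * B / x0 ^+ d.+1.
have C0 : 0 <= C by rewrite /C divr_ge0 ?mulr_ge0 // exprn_ge0 // ltW.
set a := coef d.
have Hbound : forall x, 0 <= x < x0 / 2 -> `|ce x - a * x ^+ d| <= C * x ^+ d.+1.
  move=> x /andP[x0' xr].
  have xd : 0 <= x < delta by apply/andP; split => //; rewrite /x0 in xr; lra.
  apply: (lim_bound (Hs x xd)).
  apply: filterS (nbhs_infty_ge d.+1) => n dn.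
  rewrite (coef_split x hz dn) addrC addKr.
  apply: tail_bound => //; rewrite /x0 in xr *; lra.
exists d, a; split; last first.
  by exists C, (x0 / 2); split; [rewrite divr_gt0|split].
have a0 : a != 0 by [].
rewrite lt_neqAle eq_sym a0 /=.
rewrite leNgt; apply/negP => an.
set x := Num.min (x0 / 4) ((- a) / (2 * (C + 1))).
have xp : 0 < x by rewrite /x lt_min; apply/andP; split; [rewrite divr_gt0|rewrite divr_gt0 // ?oppr_gt0 // mulr_gt0 //; lra].
have xs : x <= x0 / 4 by rewrite /x ge_min lexx.
have xa : x <= (- a) / (2 * (C + 1)) by rewrite /x ge_min lexx orbT.
have := Hbound x; rewrite (ltW xp) /=.
have -> : x < x0 / 2 by apply: le_lt_trans xs _; rewrite /x0; lra.
move=> /(_ isT) hb.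
have hcx := hpos x (ltW xp).
have xd : 0 < x ^+ d by apply: exprn_gt0.
have Cx : C * x <= - a / 2.
  have : C * x <= C * ((- a) / (2 * (C + 1))) by apply: ler_wpM2l.
  move=> h; apply: le_trans h _.
  rewrite mulrA ler_pdivrMr ?mulr_gt0 //; last lra.
  have : 0 < - a by lra.
  nra.
have : ce x - a * x ^+ d <= C * x ^+ d.+1 by apply: le_trans (ler_norm _) hb.
rewrite exprS mulrA.
have : C * x * x ^+ d <= (- a / 2) * x ^+ d by apply: ler_wpM2r => //; exact: ltW.
nra.
Qed.
Section Flow.
Variables (R : realType) (V E P : finType) (tail head : E -> V) (orig dest : V).
Variables (pe : P -> seq E) (c : E -> R -> R).

Lemma od_uniq es : is_od_path tail head orig dest es -> uniq es.
Proof.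
case/and4P => _ _ _ /= /andP[_ u].
exact: map_uniq u.
Qed.

Lemma sum_load (g : P -> R) (w : E -> R) :
  \sum_e load pe g e * w e = \sum_p g p * \sum_(e in pe p) w e.
Proof.
rewrite /load.
under eq_bigr => e _ do rewrite big_distrl /= big_mkcond /=.
rewrite exchange_big /=; apply: eq_bigr => p _.
rewrite mulr_sumr [RHS]big_mkcond /=; apply: eq_bigr => e _.
by case: ifP => _; rewrite ?mul0r ?mulr0.
Qed.

Lemma sum_sub_le (I : finType) (Q : pred I) (g : I -> R) :
  (forall i, 0 <= g i) -> \sum_(i | Q i) g i <= \sum_i g i.
Proof.
move=> g0; rewrite big_mkcond /=; apply: ler_sum => i _.
by case: ifP.
Qed.

Lemma load_ge0 (M : R) (g : P -> R) e : feasible M g -> 0 <= load pe g e.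
Proof. by case=> g0 _; apply: sumr_ge0. Qed.

Lemma load_leM (M : R) (g : P -> R) e : feasible M g -> load pe g e <= M.
Proof. by case=> g0 <-; apply: sum_sub_le. Qed.

Hypothesis Hpaths : valid_paths tail head orig dest pe.

Lemma pe_uniq p : uniq (pe p).
Proof. by case: Hpaths => _ _ /(_ p) /od_uniq. Qed.

Lemma path_cost_in (f : P -> R) p : path_cost pe c f p = \sum_(e in pe p) c e (load pe f e).
Proof. by rewrite /path_cost big_uniq // pe_uniq. Qed.

Lemma social_paths (f : P -> R) : social_cost pe c f = \sum_p f p * path_cost pe c f p.
Proof.
rewrite /social_cost sum_load; apply: eq_bigr => p _.
by rewrite path_cost_in.
Qed.

Lemma wardrop_VI (M : R) (f g : P -> R) : 0 < M -> wardrop_eq pe c M f -> feasible M g ->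
  social_cost pe c f <= \sum_e load pe g e * c e (load pe f e).
Proof.
move=> M0 [[f0 fM] Hw] [g0 gM].
rewrite social_paths sum_load.
have [p0 fp0] : exists p0, 0 < f p0.
  apply/not_existsP => hn.
  have : \sum_p f p <= \sum_(p : P) (0:R).
    apply: ler_sum => p _; rewrite leNgt; apply/negP => h; exact: (hn p).
  rewrite big1_eq; lra.
set lam := path_cost pe c f p0.
have e1 : \sum_p f p * path_cost pe c f p = \sum_p f p * lam.
  apply: eq_bigr => p _.
  have := f0 p; rewrite le_eqVlt => /orP[/eqP <-|fp]; first by rewrite !mul0r.
  congr (_ * _); apply/le_anti/andP; split; [exact: Hw|exact: Hw].
rewrite e1 -big_distrl /= fM.
have : M * lam = \sum_p g p * lam by rewrite -big_distrl /= gM.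
move=> ->; apply: ler_sum => p _.
rewrite -path_cost_in; apply: ler_wpM2l => //; exact: Hw.
Qed.

End Flow.
Lemma young (R : realFieldType) (x y : R) (n : nat) : 0 <= x -> 0 <= y ->
  n.+1%:R * (x * y ^+ n) <= x ^+ n.+1 + n%:R * y ^+ n.+1.
Proof.
move=> x0 y0; elim: n => [|n IH]; first by rewrite !expr0 !expr1 mulr1 mul1r mul0r addr0.
have key : 0 <= (x - y) * (x ^+ n.+1 - y ^+ n.+1).
  case: (lerP x y) => xy.
    apply: mulr_le0; first by rewrite subr_le0.
    by rewrite subr_le0; apply: lerXn2r.
  apply: mulr_ge0; first by rewrite subr_ge0 ltW.
  by rewrite subr_ge0; apply: lerXn2r => //; exact: ltW.
have IHy : n.+1%:R * (x * y ^+ n) * y <= (x ^+ n.+1 + n%:R * y ^+ n.+1) * y.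
  by apply: ler_wpM2r.
rewrite (exprS x n.+1) (exprS y n.+1) (exprS y n).
move: IHy key; rewrite (exprS y n).
set X := x ^+ n.+1; set Z := y ^+ n.
rewrite -!natr1.
move=> IHy key.
nra.
Qed.
Lemma term_le_sum (R : realDomainType) (I : finType) (Q : pred I) (F : I -> R) i :
  (forall j, Q j -> 0 <= F j) -> Q i -> F i <= \sum_(j | Q j) F j.
Proof.
move=> F0 Qi; rewrite (bigD1 i) //= lerDl.
by apply: sumr_ge0 => j /andP[Qj _]; exact: F0.
Qed.

Lemma sum_sub_le' (R : realDomainType) (I : finType) (Q : pred I) (g : I -> R) :
  (forall i, 0 <= g i) -> \sum_(i | Q i) g i <= \sum_i g i.
Proof.
move=> g0; rewrite big_mkcond /=; apply: ler_sum => i _.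
by case: ifP.
Qed.

Lemma exists_big_term (R : realFieldType) (I : finType) (Q : pred I) (x : I -> R) (s : R) :
  0 < s -> s <= \sum_(i | Q i) x i -> exists i, Q i /\ s <= #|I|%:R * x i.
Proof.
move=> s0 hs; apply/not_existsP => hn.
have hlt : forall i, Q i -> #|I|%:R * x i < s.
  move=> i Qi; rewrite ltNge; apply/negP => h; apply: (hn i); split => //.
case: (boolP (has Q (index_enum I))) => hQ.
  have h1 : \sum_(i | Q i) #|I|%:R * x i < \sum_(i | Q i) s by apply: ltr_sum.
  have h2 : \sum_(i | Q i) s <= \sum_(i : I) s by apply: sum_sub_le' => i; exact: ltW.
  rewrite -mulr_sumr in h1.
  have h3 : \sum_(i : I) s = #|I|%:R * s by rewrite sumr_const mulr_natl.
  have hI : 0 <= #|I|%:R :> R by [].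
  have := ler_wpM2l hI hs; lra.
have : \sum_(i | Q i) x i = 0.
  rewrite big_hasC //.
lra.
Qed.
Section Main.
Variables (R : realType) (V E P : finType) (tail head : E -> V) (orig dest : V).
Variables (pe : P -> seq E) (c : E -> R -> R).
Hypothesis Hpaths : valid_paths tail head orig dest pe.
Hypothesis Hnonneg : forall e x, 0 <= x -> 0 <= c e x.
Variables (zb : E -> bool) (dg : E -> nat) (a : E -> R).
Hypothesis Hz : forall e, zb e ->
  exists rho, 0 < rho /\ forall x, 0 <= x < rho -> c e x = 0.
Hypothesis Hexp : forall e, ~~ zb e -> 0 < a e /\ exists C rho, 0 < rho /\ 0 <= C /\
  forall x, 0 <= x < rho -> `|c e x - a e * x ^+ dg e| <= C * x ^+ (dg e).+1.

Definition good (eta M : R) := forall e, M <= 1 /\ 2 * `|a e| * M <= eta /\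
  forall y, 0 <= y <= M -> (zb e -> c e y = 0) /\
    (~~ zb e -> `|c e y - a e * y ^+ dg e| <= eta * a e * y ^+ dg e).

Lemma good_near eta : 0 < eta -> \forall M \near (0:R)^'+, good eta M.
Proof.
move=> eta0; apply: filter_forall => e.
have Hlt : forall r : R, 0 < r -> \forall M \near (0:R)^'+, M < r.
  by move=> r r0; exact: nbhs_right_lt.
have ha : 0 < 2 * `|a e| + 1 by have := normr_ge0 (a e); lra.
have h2 : 0 < eta / (2 * `|a e| + 1) by rewrite divr_gt0.
have common : forall M, 0 < M -> M < eta / (2 * `|a e| + 1) -> 2 * `|a e| * M <= eta.
  move=> M M0; rewrite ltr_pdivlMr // => h.
  have := normr_ge0 (a e); nra.
case: (boolP (zb e)) => ze.
  have [rho [rho0 Hrho]] := Hz ze.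
  near=> M.
  have M0 : 0 < M by near: M; exact: nbhs_right_gt.
  split; first by apply: ltW; near: M; exact: Hlt.
  split; first by apply: common => //; near: M; exact: Hlt.
  move=> y /andP[y0 yM]; split => [_|]; last by [].
  apply: Hrho; rewrite y0 /=; apply: le_lt_trans yM _; near: M; exact: Hlt.
have [a0 [C [rho [rho0 [C0 HC]]]]] := Hexp ze.
have h3 : 0 < eta * a e / (C + 1) by rewrite divr_gt0 ?mulr_gt0 //; lra.
near=> M.
have M0 : 0 < M by near: M; exact: nbhs_right_gt.
split; first by apply: ltW; near: M; exact: Hlt.
split; first by apply: common => //; near: M; exact: Hlt.
move=> y /andP[y0 yM]; split => [|_]; first by [].
have yr : 0 <= y < rho.
  rewrite y0 /=; apply: le_lt_trans yM _; near: M; exact: Hlt.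
apply: le_trans (HC y yr) _.
have hM : M < eta * a e / (C + 1) by near: M; exact: Hlt.
move: hM; rewrite ltr_pdivlMr; last lra.
move=> hM.
have hyd : 0 <= y ^+ dg e by apply: exprn_ge0.
rewrite exprS mulrA; apply: ler_wpM2r => //.
nra.
Unshelve. all: by end_near.
Qed.


Variables (D : nat) (pstar : P).
Hypothesis Hpstar : forall e, e \in pe pstar -> ~~ zb e -> (D <= dg e)%N.
Hypothesis Hall : forall p, exists2 e, e \in pe p & ~~ zb e && (dg e <= D)%N.

Definition isMn e := ~~ zb e && (dg e == D).
Definition isL e := ~~ zb e && (dg e < D)%N.
Definition hasL p := has isL (pe p).
Definition Hf (g : P -> R) := \sum_(e | isMn e) a e * load pe g e ^+ D.+1.
Definition NLfeas (M : R) (g : P -> R) := feasible M g /\ forall p, hasL p -> g p = 0.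
Definition Lam := inf [set Hf g | g in NLfeas 1].

Lemma amin_ex : exists am, 0 < am /\ forall e, ~~ zb e -> am <= a e.
Proof.
set S := \sum_(e | ~~ zb e) (a e)^-1.
have S0 : 0 <= S by apply: sumr_ge0 => e ze; have [a0 _] := Hexp ze; rewrite invr_ge0 ltW.
exists (1 + S)^-1; split; first by rewrite invr_gt0; lra.
move=> e ze; have [a0 _] := Hexp ze.
have h : (a e)^-1 <= S.
  by apply: (term_le_sum (Q := fun e => ~~ zb e)) => // j zj; have [aj _] := Hexp zj; rewrite invr_ge0 ltW.
rewrite -[a e]invrK lef_pV2 ?posrE ?invr_gt0 //; lra.
Qed.

Lemma load_L0 M g e : NLfeas M g -> isL e -> load pe g e = 0.
Proof.
move=> [_ hg] Le; rewrite /load big1 // => p ep; apply: hg.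
by apply/hasP; exists e.
Qed.

Lemma Hf_ge0 (g : P -> R) : (forall p, 0 <= g p) -> 0 <= Hf g.
Proof.
move=> g0; apply: sumr_ge0 => e /andP[ze _]; have [a0 _] := Hexp ze.
apply: mulr_ge0; first exact: ltW.
by apply: exprn_ge0; apply: sumr_ge0.
Qed.

Lemma sum_has (S : pred E) (g : P -> R) : (forall p, 0 <= g p) ->
  \sum_(p | has S (pe p)) g p <= \sum_(e | S e) load pe g e.
Proof.
move=> g0.
have e1 : \sum_(e | S e) load pe g e = \sum_e load pe g e * (S e)%:R.
  rewrite big_mkcond /=; apply: eq_bigr => e _; by case: (S e); rewrite ?mulr1 ?mulr0.
rewrite e1 sum_load big_mkcond /=; apply: ler_sum => p _.
case: ifP => hS; last by apply: mulr_ge0 => //; apply: sumr_ge0.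
rewrite -[X in X <= _]mulr1; apply: ler_wpM2l => //.
case/hasP: hS => e ep Se.
apply: (le_trans _ (term_le_sum (Q := fun e => e \in pe p) (F := fun e => (S e)%:R) _ ep)) => //.
by rewrite Se.
Qed.

Lemma NL1_star : NLfeas 1 (fun p => (p == pstar)%:R).
Proof.
split; first split.
- by move=> p; case: (p == pstar).
- rewrite (bigD1 pstar) //= eqxx big1 ?addr0 // => p /negbTE ->; done.
move=> p hp; case: eqP => // epp; exfalso; move: hp; rewrite epp.
case/hasP => e ep /andP[ze dlt].
by have := Hpstar ep ze; rewrite leqNgt dlt.
Qed.

Lemma NL_set_ne : [set Hf g | g in NLfeas 1] !=set0.
Proof. by exists (Hf (fun p => (p == pstar)%:R)); exists (fun p => (p == pstar)%:R) => //; exact: NL1_star. Qed.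

Lemma NL_set_lb : has_lbound [set Hf g | g in NLfeas 1].
Proof. by exists 0 => v [g [[g0 _] _] <-]; apply: Hf_ge0. Qed.

Lemma Lam_gt0 : 0 < Lam.
Proof.
have [am [am0 ham]] := amin_ex.
have cardE : (0 < #|E|)%N.
  have [e ep _] := Hall pstar; by apply/card_gt0P; exists e.
have cE : 0 < #|E|%:R :> R by rewrite ltr0n.
apply: (@lt_le_trans _ _ (am / #|E|%:R ^+ D.+1)); first by rewrite divr_gt0 // exprn_gt0.
apply: lb_le_inf; first exact: NL_set_ne.
move=> v [g [[g0 g1] gL] <-].
have hsum : 1 <= \sum_(e | isMn e) load pe g e.
  apply: le_trans (sum_has _ g0); rewrite -g1 le_eqVlt; apply/orP; left; apply/eqP.
  rewrite [LHS](bigID (fun p => has isMn (pe p))) /= [X in _ + X = _]big1 ?addr0 //.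
  move=> p hp; apply: gL; have [e ep /andP[ze dle]] := Hall p.
  apply/hasP; exists e => //; rewrite /isL ze /=.
  rewrite ltn_neqAle dle andbT; apply/negP => /eqP de.
  by move/hasP: hp; apply; exists e => //; rewrite /isMn ze de eqxx.
have [e [Me he]] := exists_big_term ltr01 hsum.
have le0 : 0 <= load pe g e by apply: sumr_ge0.
have [ae0 _] := Hexp (proj1 (andP Me)).
apply: le_trans (term_le_sum (Q := isMn) (F := fun e => a e * load pe g e ^+ D.+1) _ Me).
  have hl : #|E|%:R^-1 <= load pe g e by rewrite -div1r ler_pdivrMr // mulrC.
  rewrite -exprVn; apply: ler_pM => //; first exact: ltW.
  - by apply: ham; case/andP: Me.
  - by apply: lerXn2r => //; rewrite nnegrE invr_ge0 ltW.
move=> j /andP[zj _]; have [aj _] := Hexp zj; apply: mulr_ge0; [exact: ltW|].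
by apply: exprn_ge0; apply: sumr_ge0.
Qed.
Lemma load_scale (k : R) (g : P -> R) e : load pe (fun p => k * g p) e = k * load pe g e.
Proof. by rewrite /load mulr_sumr. Qed.

Lemma Hf_scale (k : R) (g : P -> R) : Hf (fun p => k * g p) = k ^+ D.+1 * Hf g.
Proof.
rewrite /Hf mulr_sumr; apply: eq_bigr => e _.
by rewrite load_scale exprMn mulrCA.
Qed.

Lemma NL_scale (M : R) g : 0 <= M -> NLfeas 1 g -> NLfeas M (fun p => M * g p).
Proof.
move=> M0 [[g0 g1] gL]; split; first split.
- by move=> p; apply: mulr_ge0.
- by rewrite -mulr_sumr g1 mulr1.
by move=> p hp; rewrite gL ?mulr0.
Qed.

Lemma Hf_hom (M : R) g : 0 <= M -> NLfeas M g -> Lam * M ^+ D.+1 <= Hf g.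
Proof.
move=> M0 hg; have [[g0 gM] gL] := hg.
case: (eqVneq M 0) => [->|Mn0].
  by rewrite expr0n /= mulr0; apply: Hf_ge0.
have Mp : 0 < M by rewrite lt_neqAle eq_sym Mn0.
have hg' : NLfeas 1 (fun p => M^-1 * g p).
  split; first split.
  - by move=> p; apply: mulr_ge0 => //; rewrite invr_ge0.
  - by rewrite -mulr_sumr gM mulVf.
  by move=> p hp; rewrite gL ?mulr0.
have : Lam <= Hf (fun p => M^-1 * g p).
  by apply: ge_inf; [exact: NL_set_lb | exists (fun p => M^-1 * g p)].
rewrite Hf_scale exprVn => h.
have MD : 0 < M ^+ D.+1 by apply: exprn_gt0.
rewrite -ler_pdivlMr //; by rewrite mulrC.
Qed.

Lemma near_opt eta : 0 < eta -> exists g, NLfeas 1 g /\ Hf g <= (1 + eta) * Lam.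
Proof.
move=> eta0.
have hinf : has_inf [set Hf g | g in NLfeas 1] by split; [exact: NL_set_ne|exact: NL_set_lb].
have [v [g hg <-] hv] := inf_adherent (mulr_gt0 eta0 Lam_gt0) hinf.
exists g; split => //; rewrite -/Lam in hv; apply: ltW; lra.
Qed.
Lemma expn_anti (y : R) (m n : nat) : 0 <= y -> y <= 1 -> (m <= n)%N -> y ^+ n <= y ^+ m.
Proof.
move=> y0 y1 mn; rewrite -(subnKC mn) exprD.
have h1 : y ^+ (n - m) <= 1 by apply: exprn_ile1.
have h2 : 0 <= y ^+ m by apply: exprn_ge0.
by rewrite -[X in _ <= X]mulr1; apply: ler_wpM2l.
Qed.

Lemma split_if (F G : E -> R) :
  \sum_e (if isMn e then F e else G e) = \sum_(e | isMn e) F e + \sum_(e | ~~ isMn e) G e.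
Proof.
rewrite (bigID isMn) /=; congr (_ + _); apply: eq_bigr => e.
  by move=> ->.
by move/negbTE => ->.
Qed.

Lemma eq_upper (eta M : R) (f : P -> R) : 0 < M -> 0 < eta -> eta <= 1/2 ->
  good eta M -> wardrop_eq pe c M f ->
  (1 - 4 * D%:R * eta) * social_cost pe c f <=
    (1 + eta) ^+ 2 * Lam * M ^+ D.+1 + D.+1%:R * #|E|%:R * eta * M ^+ D.+1.
Proof.
move=> M0 eta0 eta12 hgood hw.
have [g [hg hH]] := near_opt eta0.
set gM := fun p => M * g p.
have hgM : NLfeas M gM := NL_scale (ltW M0) hg.
have HgM : Hf gM = M ^+ D.+1 * Hf g by rewrite Hf_scale.
have feasM := hgM.1.
have feasf := hw.1.
have VI := wardrop_VI Hpaths M0 hw feasM.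
set S := M ^+ D.+1.
have S0 : 0 < S by apply: exprn_gt0.
set y := load pe f; set x := load pe gM.
have y0 : forall e, 0 <= y e by move=> e; exact: load_ge0 feasf.
have yM : forall e, y e <= M by move=> e; exact: load_leM feasf.
have x0 : forall e, 0 <= x e by move=> e; exact: load_ge0 feasM.
have xM : forall e, x e <= M by move=> e; exact: load_leM feasM.
have Dp : 0 < D.+1%:R :> R by rewrite ltr0n.
set A := \sum_(e | isMn e) a e * y e ^+ D.+1.
have step1 : \sum_e x e * c e (y e) <=
    \sum_e (if isMn e then (1 + eta) / D.+1%:R * (a e * x e ^+ D.+1 + D%:R * (a e * y e ^+ D.+1))
            else eta * S).
  apply: ler_sum => e _.
  have [M1 [haM hy]] := hgood e.
  have hyy : 0 <= y e <= M by rewrite y0 yM.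
  have [hz hnz] := hy (y e) hyy.
  case: ifP => hMn.
    case/andP: hMn => ze /eqP de.
    have [ae0 _] := Hexp ze.
    have hc := hnz ze; rewrite de in hc.
    have hc' : c e (y e) <= (1 + eta) * a e * y e ^+ D.
      by move: (ler_norm (c e (y e) - a e * y e ^+ D)) hc; lra.
    have hyD : 0 <= y e ^+ D by apply: exprn_ge0.
    have := young D (x0 e) (y0 e).
    move=> hyo.
    apply: le_trans (ler_wpM2l (x0 e) hc') _.
    have hxy : 0 <= x e * y e ^+ D by apply: mulr_ge0.
    have h1 : x e * ((1 + eta) * a e * y e ^+ D) = ((1 + eta) * a e) * (x e * y e ^+ D) by ring.
    rewrite h1.
    have h2 : (1 + eta) / D.+1%:R * (a e * x e ^+ D.+1 + D%:R * (a e * y e ^+ D.+1)) =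
      ((1 + eta) * a e) * ((x e ^+ D.+1 + D%:R * y e ^+ D.+1) / D.+1%:R).
      by field; rewrite gt_eqF.
    rewrite h2; apply: ler_wpM2l; first by apply: mulr_ge0; lra.
    by rewrite ler_pdivlMr // mulrC.
  case: (boolP (isL e)) => hL.
    rewrite /x (load_L0 hgM hL) mul0r; apply: mulr_ge0 => //; exact: ltW.
  have hSx : x e * c e (y e) <= M * (eta * M ^+ D).
    apply: ler_pM => //; first by apply: Hnonneg.
    case: (boolP (zb e)) => ze.
      by rewrite hz // mulr_ge0 // ?(ltW eta0) // exprn_ge0 // ltW.
    have [ae0 _] := Hexp ze.
    have dgt : (D < dg e)%N.
      move: hMn hL; rewrite /isMn /isL ze /= => /negbT; rewrite neq_ltn => /orP[] //.
      by move=> ->.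
    have hc := hnz ze.
    have hc' : c e (y e) <= 2 * a e * y e ^+ dg e.
      have hp : 0 <= a e * y e ^+ dg e by apply: mulr_ge0; [exact: ltW|exact: exprn_ge0].
      have := ler_wpM2r hp eta12.
      move: (ler_norm (c e (y e) - a e * y e ^+ dg e)) hc; lra.
    apply: le_trans hc' _.
    have hy1 : y e <= 1 by apply: le_trans (yM e) M1.
    have h1 : y e ^+ dg e <= y e ^+ D.+1 by apply: expn_anti.
    have h2 : y e ^+ D.+1 <= M ^+ D.+1.
      by apply: lerXn2r; [rewrite nnegrE; exact: y0 | rewrite nnegrE; exact: ltW | exact: yM].
    have hY : y e ^+ dg e <= M * M ^+ D by rewrite -exprS; apply: le_trans h1 h2.
    rewrite ger0_norm in haM; last exact: ltW.
    have ha2 : 0 <= 2 * a e by apply: mulr_ge0 => //; exact: ltW.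
    apply: le_trans (ler_wpM2l ha2 hY) _.
    rewrite mulrA; apply: ler_wpM2r; [exact: exprn_ge0 (ltW M0) | exact: haM].
  by apply: le_trans hSx _; rewrite /S exprS; lra.
have step2 : \sum_e (if isMn e then (1 + eta) / D.+1%:R * (a e * x e ^+ D.+1 + D%:R * (a e * y e ^+ D.+1))
            else eta * S) = (1 + eta) / D.+1%:R * (Hf gM + D%:R * A) + \sum_(e | ~~ isMn e) eta * S.
  rewrite split_if; congr (_ + _).
  by rewrite -mulr_sumr big_split /= -mulr_sumr.
have step3 : \sum_(e | ~~ isMn e) eta * S <= #|E|%:R * (eta * S).
  apply: le_trans (sum_sub_le' _ _) _.
    by move=> e; apply: mulr_ge0; [exact: ltW|exact: ltW].
  by rewrite sumr_const mulr_natl.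
have A0 : 0 <= A.
  apply: sumr_ge0 => e /andP[ze _]; have [ae0 _] := Hexp ze.
  by apply: mulr_ge0; [exact: ltW|exact: exprn_ge0].
have step4 : (1 - eta) * A <= social_cost pe c f.
  rewrite /social_cost.
  apply: le_trans (@sum_sub_le' _ _ isMn _ _); last first.
    by move=> e; apply: mulr_ge0; [exact: y0|exact: Hnonneg].
  rewrite /A mulr_sumr; apply: ler_sum => e /andP[ze /eqP de].
  have [M1 [haM hy]] := hgood e.
  have hyy : 0 <= y e <= M by rewrite y0 yM.
  have [_ hnz] := hy (y e) hyy.
  have hc := hnz ze; rewrite de in hc.
  have [ae0 _] := Hexp ze.
  have hc' : (1 - eta) * a e * y e ^+ D <= c e (y e).
    by move: (ler_norm (a e * y e ^+ D - c e (y e))) hc; rewrite distrC; lra.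
  have := ler_wpM2l (y0 e) hc'.
  by rewrite exprS; rewrite /y; lra.
have hHg : Hf gM <= (1 + eta) * Lam * S.
  rewrite HgM /S mulrC; apply: ler_wpM2r => //; exact: ltW.
have Eq0 : 0 <= social_cost pe c f.
  by apply: sumr_ge0 => e _; apply: mulr_ge0; [exact: y0|exact: Hnonneg].
set Eq := social_cost pe c f.
have h := le_trans VI step1; rewrite step2 in h; rewrite -/Eq in h step4 Eq0.
have h2 : Eq <= (1 + eta) / D.+1%:R * (Hf gM + D%:R * A) + #|E|%:R * (eta * S) by apply: le_trans h _; rewrite lerD2l.
have hT : D.+1%:R * Eq <= (1 + eta) * Hf gM + D%:R * ((1 + eta) * A) + D.+1%:R * #|E|%:R * eta * S.
  have h' := ler_wpM2l (ltW Dp) h2.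
  apply: le_trans h' _; rewrite le_eqVlt; apply/orP; left; apply/eqP.
  by field; rewrite gt_eqF.
have hA : (1 + eta) * A <= (1 + 4 * eta) * Eq.
  have : (1 + eta) * A <= (1 + 4 * eta) * ((1 - eta) * A).
    rewrite mulrA; apply: ler_wpM2r => //; nra.
  move=> h3; apply: le_trans h3 _; apply: ler_wpM2l => //; lra.
have hDA : D%:R * ((1 + eta) * A) <= D%:R * ((1 + 4 * eta) * Eq) by apply: ler_wpM2l.
have hH2 : (1 + eta) * Hf gM <= (1 + eta) * ((1 + eta) * Lam * S) by apply: ler_wpM2l => //; lra.
rewrite -natr1 in hT.
lra.
Qed.

Variables (am : R).
Hypothesis am0 : 0 < am.
Hypothesis Hama : forall e, ~~ zb e -> am <= a e.

Lemma opt_lower (eta M : R) (g : P -> R) : 0 < M -> 0 < eta -> eta <= 1/2 -> good eta M ->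
  D.+1%:R * Lam * M <= am / (2 * #|E|%:R ^+ D) * (eta / D.+1%:R) ^+ D.-1 ->
  feasible M g -> (1 - 2 * eta) * Lam * M ^+ D.+1 <= social_cost pe c g.
Proof.
move=> M0 eta0 eta12 hgood thr hg.
have [g0 gM] := hg.
set x := load pe g.
have x0 : forall e, 0 <= x e by move=> e; exact: load_ge0 hg.
have xM : forall e, x e <= M by move=> e; exact: load_leM hg.
have L0 := Lam_gt0.
have Dp : 0 < D.+1%:R :> R by rewrite ltr0n.
have step1 : \sum_e ((if isMn e then (1 - eta) * (a e * x e ^+ D.+1) else 0) +
                     (if isL e then am / 2 * x e ^+ D else 0)) <= social_cost pe c g.
  rewrite /social_cost -/x; apply: ler_sum => e _.
  have [M1 [haM hy]] := hgood e.
  have hxx : 0 <= x e <= M by rewrite x0 xM.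
  have [_ hnz] := hy (x e) hxx.
  have hxc : 0 <= x e * c e (x e) by apply: mulr_ge0; [exact: x0|exact: Hnonneg].
  case: ifP => hMn.
    have -> : isL e = false.
      by move: hMn; rewrite /isMn /isL => /andP[_ /eqP ->]; rewrite ltnn andbF.
    rewrite addr0.
    case/andP: hMn => ze /eqP de.
    have hc := hnz ze; rewrite de in hc.
    have [ae0 _] := Hexp ze.
    have hc' : (1 - eta) * a e * x e ^+ D <= c e (x e).
      by move: (ler_norm (a e * x e ^+ D - c e (x e))) hc; rewrite distrC; lra.
    have := ler_wpM2l (x0 e) hc'.
    by rewrite exprS; lra.
  rewrite add0r; case: ifP => hL //.
  case/andP: hL => ze dlt.
  have hc := hnz ze.
  have [ae0 _] := Hexp ze.
  have hp : 0 <= a e * x e ^+ dg e by apply: mulr_ge0; [exact: ltW|exact: exprn_ge0].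
  have hc' : a e / 2 * x e ^+ dg e <= c e (x e).
    have := ler_wpM2r hp eta12.
    by move: (ler_norm (a e * x e ^+ dg e - c e (x e))) hc; rewrite distrC; lra.
  have hx1 : x e <= 1 by apply: le_trans (xM e) M1.
  have h1 : x e ^+ D <= x e ^+ (dg e).+1 by apply: expn_anti.
  have h2 : am / 2 * x e ^+ D <= a e / 2 * x e ^+ (dg e).+1.
    apply: ler_pM; [by rewrite divr_ge0 // ltW | exact: exprn_ge0 | | exact: h1].
    by apply: ler_pM => //; [exact: ltW | exact: Hama].
  apply: le_trans h2 _.
  have := ler_wpM2l (x0 e) hc'.
  by rewrite exprS; lra.
have step2 : \sum_e ((if isMn e then (1 - eta) * (a e * x e ^+ D.+1) else 0) +
                     (if isL e then am / 2 * x e ^+ D else 0)) =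
    (1 - eta) * Hf g + am / 2 * \sum_(e | isL e) x e ^+ D.
  by rewrite big_split /= -!big_mkcond /= -!mulr_sumr.
rewrite step2 in step1.
set SL := \sum_(e | isL e) x e ^+ D in step1.
have SL0 : 0 <= SL by apply: sumr_ge0 => e _; exact: exprn_ge0.
set t := \sum_(p | hasL p) g p.
set g' := fun p => if hasL p then 0 else g p.
have t0 : 0 <= t by apply: sumr_ge0.
have tM : t <= M by rewrite -gM; apply: sum_sub_le'.
have hg' : NLfeas (M - t) g'.
  split; [split|].
  - by move=> p; rewrite /g'; case: ifP.
  - have e1 : \sum_p g p = t + \sum_(p | ~~ hasL p) g p by rewrite (bigID hasL).
    have e2 : \sum_p g' p = \sum_(p | ~~ hasL p) g p.
      rewrite (bigID hasL) /= big1 ?add0r.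
        by apply: eq_bigr => p /negbTE; rewrite /g' => ->.
      by move=> p hp; rewrite /g' hp.
    rewrite e2; lra.
  by move=> p hp; rewrite /g' hp.
have hHg' := Hf_hom (ltac:(lra) : 0 <= M - t) hg'.
have hHmono : Hf g' <= Hf g.
  apply: ler_sum => e /andP[ze _]; have [ae0 _] := Hexp ze.
  apply: ler_wpM2l; first exact: ltW.
  have hl : load pe g' e <= load pe g e.
    by apply: ler_sum => p _; rewrite /g'; case: ifP.
  apply: lerXn2r => //; rewrite nnegrE; apply: sumr_ge0 => p _.
    by rewrite /g'; case: ifP.
  exact: g0.
have bern : M * M ^+ D - D.+1%:R * (t * M ^+ D) <= (M - t) ^+ D.+1.
  have := young D (ltac:(lra) : 0 <= M - t) (ltW M0).
  rewrite !exprS -natr1; lra.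
have MD0 : 0 < M ^+ D by apply: exprn_gt0.
have hHg : Lam * (M * M ^+ D - D.+1%:R * (t * M ^+ D)) <= Hf g.
  apply: le_trans (ler_wpM2l (ltW L0) bern) _; apply: le_trans hHg' hHmono.
have heta : (1 - eta) * (Lam * (M * M ^+ D - D.+1%:R * (t * M ^+ D))) <= (1 - eta) * Hf g.
  by apply: ler_wpM2l => //; lra.
have ham2 : 0 <= am / 2 by rewrite divr_ge0 // ltW.
have hSL : 0 <= am / 2 * SL by apply: mulr_ge0.
have hLM : 0 <= Lam * (M * M ^+ D) by apply: mulr_ge0; [exact: ltW| apply: mulr_ge0; [exact: ltW|exact: ltW]].
rewrite exprS.
case: (eqVneq t 0) => [t00|tn0].
  rewrite t00 mul0r mulr0 subr0 in heta.
  have : 0 <= eta * (Lam * (M * M ^+ D)) by apply: mulr_ge0 => //; exact: ltW.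
  lra.
have tpos : 0 < t by rewrite lt_neqAle eq_sym tn0.
have hs : t <= \sum_(e | isL e) x e := sum_has isL g0.
have [e0 [Le0 he0]] := exists_big_term tpos hs.
have D0 : (0 < D)%N by case/andP: Le0 => _ dl; apply: leq_ltn_trans dl.
have cE : 0 < #|E|%:R :> R by rewrite ltr0n; apply/card_gt0P; exists e0.
have hx0 : t / #|E|%:R <= x e0 by rewrite ler_pdivrMr // mulrC.
have hSL2 : (t / #|E|%:R) ^+ D <= SL.
  apply: le_trans (term_le_sum (Q := isL) (F := fun e => x e ^+ D) _ Le0).
    apply: lerXn2r => //; rewrite nnegrE ?divr_ge0 //; exact: ltW.
  by move=> j _; apply: exprn_ge0.
set beta := am / (2 * #|E|%:R ^+ D).
set kappa := eta / D.+1%:R.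
have beta0 : 0 < beta by rewrite divr_gt0 // mulr_gt0 // exprn_gt0.
have hbeta : beta * (t ^+ D.-1 * t) <= am / 2 * SL.
  have -> : beta * (t ^+ D.-1 * t) = am / 2 * (t / #|E|%:R) ^+ D.
    rewrite -exprSr prednK // /beta expr_div_n; field.
    by rewrite expf_neq0 // gt_eqF.
  by apply: ler_wpM2l.
have tD0 : 0 <= t ^+ D.-1 by apply: exprn_ge0.
have hLt : 0 <= D.+1%:R * Lam * M ^+ D by apply: mulr_ge0; [apply: mulr_ge0; exact: ltW|exact: ltW].
case: (lerP (D.+1%:R * Lam * M ^+ D) (beta * t ^+ D.-1)) => hcase.
  have : D.+1%:R * Lam * M ^+ D * t <= beta * t ^+ D.-1 * t by apply: ler_wpM2r => //; exact: ltW.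
  have : 0 <= eta * (D.+1%:R * Lam * M ^+ D * t) by apply: mulr_ge0; [exact: ltW|apply: mulr_ge0 => //; exact: ltW].
  have : 0 <= eta * (Lam * (M * M ^+ D)) by apply: mulr_ge0 => //; exact: ltW.
  rewrite mulrA in hbeta.
  lra.
have tk : t <= kappa * M.
  rewrite leNgt; apply/negP => hlt.
  have h1 : (kappa * M) ^+ D.-1 <= t ^+ D.-1.
    apply: lerXn2r; rewrite ?nnegrE; [apply: mulr_ge0; [rewrite divr_ge0 //; exact: ltW|exact: ltW]|exact: ltW|exact: ltW].
  have h2 : beta * (kappa * M) ^+ D.-1 < D.+1%:R * Lam * M ^+ D.
    exact: (le_lt_trans (ler_wpM2l (ltW beta0) h1) hcase).
  rewrite exprMn -(prednK D0) exprS prednK // in h2.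
  have MD1 : 0 < M ^+ D.-1 by apply: exprn_gt0.
  have h3 : beta * kappa ^+ D.-1 * M ^+ D.-1 < D.+1%:R * Lam * M * M ^+ D.-1 by rewrite -mulrA; lra.
  rewrite ltr_pM2r // in h3.
  move: thr; rewrite -/beta -/kappa; lra.
have hk : D.+1%:R * Lam * t * M ^+ D <= eta * (Lam * (M * M ^+ D)).
  have : D.+1%:R * Lam * t * M ^+ D <= D.+1%:R * Lam * (kappa * M) * M ^+ D.
    apply: ler_wpM2r; first exact: ltW.
    apply: ler_wpM2l => //; apply: mulr_ge0; exact: ltW.
  move=> h; apply: le_trans h _; rewrite le_eqVlt; apply/orP; left; apply/eqP.
  by rewrite /kappa; field; rewrite gt_eqF.
have : 0 <= eta * (D.+1%:R * Lam * t * M ^+ D) by apply: mulr_ge0; [exact: ltW|apply: mulr_ge0 => //; [apply: mulr_ge0 => //; apply: mulr_ge0; exact: ltW|exact: ltW]].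
have : 0 <= beta * (t ^+ D.-1 * t) by apply: mulr_ge0; [exact: ltW|apply: mulr_ge0 => //; exact: ltW].
lra.
Qed.
Lemma alg_up (Dr Er L S eta eps Eq : R) : 0 <= Dr -> 0 <= Er -> 0 < L -> 0 < S ->
  0 < eps -> eps <= 1 -> eta = eps / (8 + (Dr + 1) * Er / L + 16 * Dr) -> 0 <= Eq ->
  (1 - 4 * Dr * eta) * Eq <= (1 + eta) ^+ 2 * L * S + (Dr + 1) * Er * eta * S ->
  Eq <= (1 + eps) * L * S.
Proof.
move=> D0 E0 L0 S0 e0 e1 heta Eq0 h.
set K := (Dr + 1) * Er / L.
have K0 : 0 <= K by apply: divr_ge0; [apply: mulr_ge0 => //; lra | exact: ltW].
have W0 : 0 < 8 + K + 16 * Dr by lra.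
have hW : eta * (8 + K + 16 * Dr) = eps by rewrite heta -/K divfK // gt_eqF.
have eta0 : 0 < eta by rewrite heta divr_gt0.
have eta8 : eta * 8 <= eps by nra.
have etaD : eta * (16 * Dr) <= eps by nra.
have etaK : eta * K <= eps by nra.
have hKL : (Dr + 1) * Er * eta * S = (eta * K) * L * S by rewrite /K; field; lra.
rewrite hKL in h.
have hsq : (1 + eta) ^+ 2 <= 1 + 3 * eta by rewrite expr2; nra.
have LS0 : 0 < L * S by apply: mulr_gt0.
have h1 : (1 + eta) ^+ 2 * L * S <= (1 + 3 * eta) * (L * S).
  by rewrite -mulrA; apply: ler_wpM2r => //; exact: ltW.
have h2 : eta * K * L * S = (eta * K) * (L * S) by rewrite mulrA.
rewrite h2 in h.
have hb : (1 - 4 * Dr * eta) * Eq <= (1 + 3 * eta + eta * K) * (L * S) by lra.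
have hD : 4 * Dr * eta <= 1/4 by lra.
have hcrude : Eq <= 4 * (L * S).
  have : (1 + 3 * eta + eta * K) * (L * S) <= 3 * (L * S) by apply: ler_wpM2r; [exact: ltW|lra].
  nra.
have : 4 * Dr * eta * Eq <= 4 * Dr * eta * (4 * (L * S)) by apply: ler_wpM2l => //; nra.
have : (3 * eta + eta * K + 16 * Dr * eta) * (L * S) <= eps * (L * S) by apply: ler_wpM2r; [exact: ltW|lra].
nra.
Qed.
Lemma main_conv (feq : R -> P -> R) (Hfeq : forall M, 0 < M -> wardrop_eq pe c M (feq M)) :
  (fun M => PoA pe c M (feq M)) @ (0:R)^'+ --> (1:R).
Proof.
apply/cvgrPdist_le => eps eps0.
have L0 := Lam_gt0.
set ep := Num.min (eps / 4) (1/4).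
have ep0 : 0 < ep by rewrite /ep lt_min; apply/andP; split; [rewrite divr_gt0|]; lra.
have ep1 : ep <= 1/4 by rewrite /ep ge_min lexx orbT.
have epe : ep <= eps / 4 by rewrite /ep ge_min lexx.
set Dr := D%:R : R; set Er := #|E|%:R : R.
have Dr0 : 0 <= Dr by [].
have Er0 : 0 <= Er by [].
have K0 : 0 <= (Dr + 1) * Er / Lam by apply: divr_ge0; [apply: mulr_ge0 => //; lra | exact: ltW].
set W := 8 + (Dr + 1) * Er / Lam + 16 * Dr.
have W8 : 8 <= W by rewrite /W; lra.
set eta := ep / W.
have eta0 : 0 < eta by rewrite /eta divr_gt0 //; lra.
have eta8 : eta * 8 <= ep.
  have : eta * 8 <= eta * W by apply: ler_wpM2l => //; exact: ltW.
  by rewrite /eta divfK // gt_eqF //; lra.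
have eta12 : eta <= 1/2 by lra.
set beta := am / (2 * #|E|%:R ^+ D).
set kappa := eta / D.+1%:R.
have Dp : 0 < D.+1%:R :> R by rewrite ltr0n.
have cE : 0 < #|E|%:R :> R.
  rewrite ltr0n; have [e _ _] := Hall pstar; by apply/card_gt0P; exists e.
have beta0 : 0 < beta by rewrite /beta divr_gt0 // mulr_gt0 // exprn_gt0.
have kappa0 : 0 < kappa by rewrite divr_gt0.
set thrv := beta * kappa ^+ D.-1 / (D.+1%:R * Lam).
have thr0 : 0 < thrv by apply: divr_gt0; [apply: mulr_gt0 => //; exact: exprn_gt0 | exact: mulr_gt0].
near=> M.
have M0 : 0 < M by near: M; exact: nbhs_right_gt.
have hgood : good eta M by near: M; exact: good_near.
have hthr : M < thrv by near: M; exact: nbhs_right_lt.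
have thr : D.+1%:R * Lam * M <= am / (2 * #|E|%:R ^+ D) * (eta / D.+1%:R) ^+ D.-1.
  move: hthr; rewrite /thrv ltr_pdivlMr ?mulr_gt0 // => h.
  by rewrite -/beta -/kappa mulrC; apply: ltW.
have hw := Hfeq M M0.
set f := feq M.
have hup := eq_upper M0 eta0 eta12 hgood hw.
set S := M ^+ D.+1.
have S0 : 0 < S by apply: exprn_gt0.
set Eq := social_cost pe c f.
have Eq0 : 0 <= Eq.
  by apply: sumr_ge0 => e _; apply: mulr_ge0; [exact: load_ge0 hw.1|apply: Hnonneg; exact: load_ge0 hw.1].
have eD : D.+1%:R = Dr + 1 :> R by rewrite /Dr natr1.
rewrite eD -/Dr -/Er in hup.
have hEq : Eq <= (1 + ep) * Lam * S.
  apply: (alg_up Dr0 Er0 L0 S0 ep0 _ _ Eq0 hup); first lra.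
  by rewrite /eta /W.
have hlow : forall g, feasible M g -> (1 - 2 * eta) * Lam * S <= social_cost pe c g.
  by move=> g hg; exact: opt_lower M0 eta0 eta12 hgood thr hg.
set O := Opt pe c M.
have hne : [set social_cost pe c g | g in feasible M] !=set0.
  by exists Eq; exists f => //; exact: hw.1.
have hOl : (1 - 2 * eta) * Lam * S <= O.
  by apply: lb_le_inf => // v [g hg <-]; exact: hlow.
have hOu : O <= Eq.
  apply: ge_inf; last by exists f => //; exact: hw.1.
  exists 0 => v [g hg <-].
  by apply: sumr_ge0 => e _; apply: mulr_ge0; [exact: load_ge0 hg|apply: Hnonneg; exact: load_ge0 hg].
have LS0 : 0 < Lam * S by apply: mulr_gt0.
have O0 : 0 < O.
  apply: lt_le_trans hOl; rewrite -mulrA; apply: mulr_gt0 => //; lra.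
rewrite /PoA -/O O0.
have r1 : 1 <= Eq / O by rewrite ler_pdivlMr // mul1r.
have r2 : Eq / O <= 1 + eps.
  rewrite ler_pdivrMr //.
  have h1 : (1 + ep) * (Lam * S) <= (1 + eps) * ((1 - 2 * eta) * (Lam * S)).
    rewrite [X in _ <= X]mulrA; apply: ler_wpM2r; first exact: ltW.
    nra.
  have h2 : (1 + eps) * ((1 - 2 * eta) * (Lam * S)) <= (1 + eps) * O.
    by apply: ler_wpM2l; [lra | rewrite mulrA].
  rewrite -mulrA in hEq; lra.
rewrite -/Eq ler_norml; apply/andP; split; lra.
Unshelve. all: by end_near.
Qed.

End Main.
Lemma max_nat (Q : nat -> Prop) m : Q 0%N -> (forall n, Q n -> (n <= m)%N) ->
  exists D, Q D /\ ~ Q D.+1.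
Proof.
move=> Q0 Qm; case: (pselect (exists D, Q D /\ ~ Q D.+1)) => // hn; exfalso.
have hall : forall n, Q n.
  elim => // n IH; case: (pselect (Q n.+1)) => // hq; exfalso; apply: hn; by exists n.
by have := Qm m.+1 (hall m.+1); rewrite ltnn.
Qed.

Unset Implicit Arguments.

Theorem corollary4p4 (R : realType) (V E P : finType)
  (tail head : E -> V) (orig dest : V) (pe : P -> seq E) (c : E -> R -> R)
  (Hpaths : valid_paths tail head orig dest pe)
  (Hcost : forall e, admissible_cost (c e))
  (Hanalytic : forall e, analytic_at0 (c e))
  (feq : R -> P -> R)
  (Hfeq : forall M, 0 < M -> wardrop_eq pe c M (feq M)) :
  (fun M => PoA pe c M (feq M)) @ (0:R)^'+ --> (1:R).
Proof.
have Hnonneg : forall e x, 0 <= x -> 0 <= c e x.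
  by move=> e x hx; have [_ _ h] := Hcost e; exact: h.
have Hcl : forall e, exists t : bool * nat * R,
   (t.1.1 -> exists rho, 0 < rho /\ forall x, 0 <= x < rho -> c e x = 0) /\
   (~~ t.1.1 -> 0 < t.2 /\ exists C rho, 0 < rho /\ 0 <= C /\
      forall x, 0 <= x < rho -> `|c e x - t.2 * x ^+ t.1.2| <= C * x ^+ t.1.2.+1).
  move=> e; case: (edge_expansion (Hanalytic e) (Hnonneg e)) => [hz|[d [a0 [ha hC]]]].
    by exists (true, 0%N, 0); split.
  by exists (false, d, a0); split.
have [tr Htr] := choice Hcl.
pose zb := fun e => (tr e).1.1.
pose dg := fun e => (tr e).1.2.
pose a := fun e => (tr e).2.
have Hz : forall e, zb e -> exists rho, 0 < rho /\ forall x, 0 <= x < rho -> c e x = 0.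
  by move=> e; exact: (Htr e).1.
have Hexp : forall e, ~~ zb e -> 0 < a e /\ exists C rho, 0 < rho /\ 0 <= C /\
    forall x, 0 <= x < rho -> `|c e x - a e * x ^+ dg e| <= C * x ^+ (dg e).+1.
  by move=> e; exact: (Htr e).2.
have [p0 _] : exists p : P, True.
  by case: Hpaths => /card_gt0P [p _] _ _; exists p.
case: (pselect (exists p, forall e, e \in pe p -> zb e)) => [[p hp]|hnot].
  apply/cvgrPdist_le => eps eps0.
  have hnear : \forall M \near (0:R)^'+, forall e, zb e -> forall y, 0 <= y <= M -> c e y = 0.
    apply: filter_forall => e; case: (boolP (zb e)) => ze; last first.
      by apply: filterE => M; case.
    have [rho [rho0 Hr]] := Hz e ze.
    apply: filterS (nbhs_right_lt rho0) => M hM _ y /andP[y0 yM]; apply: Hr.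
    by rewrite y0 /=; exact: le_lt_trans yM hM.
  apply: filterS2 _ (nbhs_right_gt 0) hnear => M M0 hM.
  have hw := Hfeq M M0.
  set f := feq M.
  set gM := fun q => M * (q == p)%:R.
  have feasM : feasible M gM.
    split; first by move=> q; apply: mulr_ge0; [exact: ltW|case: (q == p)].
    by rewrite -mulr_sumr (bigD1 p) //= eqxx big1 ?addr0 ?mulr1 // => q /negbTE ->.
  have VI := wardrop_VI Hpaths M0 hw feasM.
  have Eq0 : social_cost pe c f <= 0.
    apply: le_trans VI _; rewrite le_eqVlt; apply/orP; left; apply/eqP.
    apply: big1 => e _.
    case: (boolP (e \in pe p)) => ep.
      rewrite (hM e (hp e ep)) ?mulr0 //.
      by rewrite (load_ge0 pe e hw.1) (load_leM pe e hw.1).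
    rewrite /load big1 ?mul0r // => q eq.
    case: (eqVneq q p) => [eqp|nqp]; last by rewrite /gM (negbTE nqp) mulr0.
    by rewrite -eqp eq in ep.
  have hsoc0 : forall g, feasible M g -> 0 <= social_cost pe c g.
    move=> g hg; apply: sumr_ge0 => e _; apply: mulr_ge0; first exact: load_ge0 hg.
    by apply: Hnonneg; exact: load_ge0 hg.
  have hOl : 0 <= Opt pe c M.
    apply: lb_le_inf; first by exists (social_cost pe c f); exists f => //; exact: hw.1.
    by move=> v [g hg <-]; exact: hsoc0.
  have hOu : Opt pe c M <= social_cost pe c f.
    apply: ge_inf; last by exists f => //; exact: hw.1.
    by exists 0 => v [g hg <-]; exact: hsoc0.
  have -> : PoA pe c M (feq M) = 1.
    rewrite /PoA; case: ifP => // hpos; exfalso.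
    by move: hpos; rewrite -/f; lra.
  by rewrite subrr normr0 ltW.
have hnz : forall p, exists2 e, e \in pe p & ~~ zb e.
  move=> p; case: (pselect (exists2 e, e \in pe p & ~~ zb e)) => // hn.
  exfalso; apply: hnot; exists p => e ep.
  apply/negPn/negP => ze; apply: hn; by exists e.
set Qd := fun n => exists p, forall e, e \in pe p -> ~~ zb e -> (n <= dg e)%N.
have [D [[pstar Hpstar] hD1]] : exists D, Qd D /\ ~ Qd D.+1.
  apply: (@max_nat Qd (\sum_e dg e)).
    by exists p0 => e _ _.
  move=> n [p hp]; have [e ep ze] := hnz p.
  apply: leq_trans (hp e ep ze) _.
  by rewrite (bigD1 e) //= leq_addr.
have Hall : forall p, exists2 e, e \in pe p & ~~ zb e && (dg e <= D)%N.
  move=> p; case: (pselect (exists2 e, e \in pe p & ~~ zb e && (dg e <= D)%N)) => // hn.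
  exfalso; apply: hD1; exists p => e ep ze.
  rewrite ltnNge; apply/negP => hle; apply: hn; exists e => //; by rewrite ze.
have [am [am0 Hama]] := amin_ex Hexp.
exact: (main_conv Hpaths Hnonneg Hz Hexp Hpstar Hall am0 Hama Hfeq).
Qed.
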